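(* Let $G$ and $H$ be connected graphs with no self-loops. Then $G$ and $H$ are strongly disjoint if and only if they are weakly disjoint and exactly one of the two graphs is a tree.
   Context: A weight function on a finite set $U$ is a map $\alpha:U\times U\to\mathbb{R}$ with $\alpha\ge 0$, $\alpha(u,u')=\alpha(u',u)$, and $\sum_{u,u'}\alpha(u,u')=1$; its degree function is $p(u)=\sum_{u'}\alpha(u,u')$. A graph is $G=(U,\alpha)$ with $U$ finite; edges are pairs $(u,u')$ with $\alpha(u,u')>0$; a self-loop is an edge $(u,u)$. $G$ is connected if any two distinct vertices are joined by a path of edges; a tree is a connected graph (viewed as an undirected graph) with no cycles. For graphs $G=(U,\alpha)$, $H=(V,\beta)$ with degree functions $p,q$, a weight joining is a weight function $\gamma$ on $U\times V$ whose degree function $r(u,v)=\sum_{(u',v')}\gamma((u,v),(u',v'))$ satisfies (a) $\sum_v r(u,v)=p(u)$, $\sum_u r(u,v)=q(v)$, and (b) $p(u)\sum_{\tilde v}\gamma((u,v),(u',\tilde v))=\alpha(u,u')r(u,v)$ and $q(v)\sum_{\tilde u}\gamma((u,v),(\tilde u,v'))=\beta(v,v')r(u,v)$ for all $u,u',v,v'$. A graph joining is $K=(U\times V,\gamma)$ with $\gamma$ a weight joining; $\mathcal{J}(G,H)$ is the set of graph joinings. The tensor product is $G\otimes H=(U\times V,\alpha\otimes\beta)$ with $(\alpha\otimes\beta)((u,v),(u',v'))=\alpha(u,u')\beta(v,v')$; it always lies in $\mathcal{J}(G,H)$. $G,H$ are strongly disjoint if $\mathcal{J}(G,H)=\{G\otimes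 H\}$, and weakly disjoint if every $K\in\mathcal{J}(G,H)$ has degree function $r(u,v)=p(u)q(v)$. *)

(* Defs.v *)
From HB Require Import structures.
From mathcomp Require Import all_boot all_order all_algebra.
From mathcomp Require Import reals.
Set Implicit Arguments. Unset Strict Implicit. Unset Printing Implicit Defensive.
Import Order.TTheory GRing.Theory Num.Theory.
Local Open Scope ring_scope.

Section Defs.
Variable R : realType.

Definition is_weight (U : finType) (a : U -> U -> R) : Prop :=
  [/\ forall u u', 0 <= a u u',
      forall u u', a u u' = a u' u &
      \sum_(u : U) \sum_(u' : U) a u u' = 1].

Definition degf (U : finType) (a : U -> U -> R) (u : U) : R :=
  \sum_(u' : U) a u u'.

Definition edge (U : finType) (a : U -> U -> R) : rel U :=
  fun u u' => 0 < a u u'.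

Definition no_self_loops (U : finType) (a : U -> U -> R) : Prop :=
  forall u, a u u = 0.

Definition connected_graph (U : finType) (a : U -> U -> R) : Prop :=
  forall u u', connect (edge a) u u'.

(* no cycle: no closed walk through >= 3 pairwise distinct vertices
   (self-loops and cycles of length 2 are excluded separately: the
   graph is undirected and simple, loops are handled by no_self_loops) *)
Definition acyclic (U : finType) (a : U -> U -> R) : Prop :=
  (forall u, a u u = 0) /\
  forall p : seq U, (3 <= size p)%N -> uniq p -> ~~ cycle (edge a) p.

Definition is_tree (U : finType) (a : U -> U -> R) : Prop :=
  connected_graph a /\ acyclic a.

Definition tensorw (U V : finType) (a : U -> U -> R) (b : V -> V -> R)
  : U * V -> U * V -> R :=
  fun x y => a x.1 y.1 * b x.2 y.2.

Definition weight_joining (U V : finType) (a : U -> U -> R) (b : V -> V -> R)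
    (g : U * V -> U * V -> R) : Prop :=
  let p := degf a in let q := degf b in let r := degf g in
  [/\ is_weight g,
      forall u, \sum_(v : V) r (u, v) = p u,
      forall v, \sum_(u : U) r (u, v) = q v,
      forall u v u', p u * (\sum_(v' : V) g (u, v) (u', v')) = a u u' * r (u, v) &
      forall u v v', q v * (\sum_(u' : U) g (u, v) (u', v')) = b v v' * r (u, v)].

Definition strongly_disjoint (U V : finType) (a : U -> U -> R) (b : V -> V -> R) : Prop :=
  forall g, weight_joining a b g <-> g = tensorw a b.

Definition weakly_disjoint (U V : finType) (a : U -> U -> R) (b : V -> V -> R) : Prop :=
  forall g, weight_joining a b g -> forall u v, degf g (u, v) = degf a u * degf b v.

End Defs.

(* Main.v *)
Require Import Defs.
From HB Require Import structures.
From mathcomp Require Import all_boot all_order all_algebra.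
From mathcomp Require Import reals.
From mathcomp Require Import ring lra zify.
From Stdlib Require Import Classical FunctionalExtensionality.
Set Implicit Arguments. Unset Strict Implicit. Unset Printing Implicit Defensive.

Section NB.
Variables (U : finType) (s : rel U).
Hypothesis hs0 : forall x, ~~ s x x.
Hypothesis hstep : forall x y, s x y -> exists z, (z != x) && s y z.

Definition nbr : rel (U * U) := fun p q => [&& q.1 == p.2, q.2 != p.1 & s q.1 q.2].

Lemma nb_last p st : path nbr st p -> s st.1 st.2 -> s (last st p).1 (last st p).2.
Proof.
elim: p st => [|q p IH] st //= /andP[/and3P[_ _ h] hp] _; exact: IH.
Qed.

Lemma nb_walk n x y : s x y -> exists p, size p = n /\ path nbr (x, y) p.
Proof.
move=> hxy; elim: n => [|n [p [hsz hp]]]; first by exists [::].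
have := nb_last hp hxy; set z := last _ p => hz.
have [w /andP[hw1 hw2]] := hstep hz.
exists (rcons p (z.2, w)); rewrite size_rcons hsz rcons_path hp /=.
by rewrite /nbr /= eqxx hw1 hw2.
Qed.

Lemma nb_snd q st : path nbr st q ->
  path s st.2 (map snd q) /\ last st.2 (map snd q) = (last st q).2.
Proof.
elim: q st => [|z q IH] st //= /andP[/and3P[/eqP h1 _ h3] hp].
have [IH1 IH2] := IH _ hp; split => //.
by rewrite -h1 h3.
Qed.

Lemma nb_extract p st : s st.1 st.2 -> path nbr st p ->
  ~~ uniq (st.1 :: map snd (st :: p)) ->
  exists c, [/\ (3 <= size c)%N, uniq c & cycle s c].
Proof.
elim: p st => [|q p IH] st hst.
  move=> _ /=; rewrite inE andbT negbK => /eqP h.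
  by move: hst; rewrite h (negbTE (hs0 _)).
rewrite [path _ _ _]/= => /andP[hq hp].
have hq' := hq; move: hq' => /and3P[/eqP hq1 hq2 hq3].
rewrite [map _ _]/= -[st.2 :: _]/(st.2 :: map snd (q :: p)).
rewrite cons_uniq negb_and negbK.
have Et : st.2 :: map snd (q :: p) = q.1 :: map snd (q :: p) by rewrite hq1.
case/orP; last by rewrite Et => hu; apply: (IH q hq3 hp hu).
case: (boolP (uniq (st.2 :: map snd (q :: p)))); last first.
  by rewrite Et => hu _; apply: (IH q hq3 hp hu).
move=> hu; rewrite inE => /orP[/eqP h|].
  by move: hst; rewrite h (negbTE (hs0 _)).
move=> /mapP[z hz hz2].
have [q1 [q2 E]] : exists q1 q2, q :: p = q1 ++ z :: q2.
  by case/splitPr: hz => q1 q2; exists q1, q2.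
have hp0 : path nbr st (q :: p) by rewrite /= hq hp.
rewrite E in hp0 hu; clear hp.
case: q1 E hp0 hu => [|q0 q1].
  case=> hqz _ _ _; move: hq2; rewrite hz2 hqz.
  by rewrite eqxx.
move=> E hp' hu.
exists (st.1 :: st.2 :: map snd (q0 :: q1)); split.
- by [].
- move: hu; rewrite map_cat -cat_cons.
  rewrite cat_uniq => /and3P[h1 h2 _].
  rewrite cons_uniq h1 andbT.
  apply: contra h2 => h; apply/hasP; exists st.1 => //; by rewrite hz2 mem_head.
- move: hp'; rewrite cat_path => /andP[hp1 hp2].
  have [hs1 hs2] := nb_snd hp1.
  move: hp2 => /= /andP[/and3P[/eqP hz1 _ hz3] _].
  rewrite /= hst /= rcons_path.
  move: hs1 hs2 => /= /andP[-> ->] /= ->.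
  by rewrite -hz1 hz2.
Qed.

Lemma nb_cycle x y : s x y -> exists c, [/\ (3 <= size c)%N, uniq c & cycle s c].
Proof.
move=> hxy; have [p [hsz hp]] := nb_walk #|U| hxy.
apply: (@nb_extract p (x, y) hxy hp); apply/negP => hu.
have := max_card (mem (x :: map snd ((x, y) :: p))).
rewrite (card_uniqP hu) /= size_map hsz.
by rewrite ltnNge leqnSn.
Qed.
End NB.

Section Odd.
Variables (U : finType) (e : rel U).
Hypothesis he0 : forall x, ~~ e x x.

Lemma cycle_split y t1 t3 :
  cycle e (y :: t1 ++ y :: t3) -> cycle e (y :: t1) /\ cycle e (y :: t3).
Proof.
rewrite /= rcons_cat /= cat_path /= rcons_path => /and3P[h1 h2 h3]; split => //; first by rewrite rcons_path h1 h2.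
Qed.

Lemma odd_cycle n c : (size c <= n)%N -> cycle e c -> odd (size c) ->
  exists p, [/\ (3 <= size p)%N, uniq p & cycle e p].
Proof.
elim: n c => [|n IH] c.
  by rewrite leqn0 => /eqP/size0nil ->.
move=> hsz hc ho.
case: (boolP (uniq c)) => hu.
  exists c; split => //.
  case: c hsz hc ho hu => [|x [|y [|z t]]] //= _.
  by rewrite (negbTE (he0 x)).
case: c hsz hc ho hu => [|x0 c0] //; set c := x0 :: c0 => hsz hc ho hu.
have [i [j [hij hjs hn]]] := uniqPn x0 hu.
set y := nth x0 c i.
have his : (i < size c)%N by apply: ltn_trans hjs.
have hy : y \in drop i.+1 c.
  have hlt : (j - i.+1 < size (drop i.+1 c))%N.
    rewrite size_drop; move: hij hjs; move: (size c) => m; lia.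
  have := mem_nth x0 hlt; rewrite nth_drop subnKC //.
  by rewrite /y hn; apply.
have [t1 [t2 hdrop]] : exists t1 t2, drop i.+1 c = t1 ++ y :: t2.
  by case/splitPr: hy => t1 t2; exists t1, t2.
have hrot : rot i c = y :: t1 ++ y :: (t2 ++ take i c).
  by rewrite /rot (drop_nth x0 his) hdrop /= -catA.
have hc' : cycle e (y :: t1 ++ y :: (t2 ++ take i c)) by rewrite -hrot rot_cycle.
have hsz' : size c = ((size t1).+1 + (size (t2 ++ take i c)).+1)%N.
  rewrite -(size_rot i c) hrot /= size_cat /=; lia.
have [h1 h2] := cycle_split hc'.
move: ho; rewrite hsz' oddD.
case ho1: (odd (size t1).+1) => /= ho2.
  apply: (IH (y :: t1)) => //=.
  by have := hsz; rewrite hsz'; lia.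
apply: (IH (y :: (t2 ++ take i c))) => //=.
by have := hsz; rewrite hsz'; lia.
Qed.
End Odd.

Import Order.TTheory GRing.Theory Num.Theory.
Local Open Scope ring_scope.

Section Basic.
Variable R : realType.

Lemma sumUV (U V : finType) (f : U * V -> R) :
  \sum_(y : U * V) f y = \sum_(u : U) \sum_(v : V) f (u, v).
Proof. by rewrite pair_big /=; apply: eq_bigr => -[u v]. Qed.

Lemma sum_eq1 (T : finType) (x : T) : \sum_(y : T) ((y == x)%:R : R) = 1.
Proof. by rewrite (bigD1 x) //= eqxx big1 ?addr0 // => y /negbTE ->. Qed.

Variables (U V : finType) (a : U -> U -> R) (b : V -> V -> R).
Hypothesis ha : is_weight a.
Hypothesis hb : is_weight b.

Lemma degT u v : degf (tensorw a b) (u, v) = degf a u * degf b v.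
Proof.
rewrite /degf sumUV /tensorw /= mulr_suml; apply: eq_bigr => u' _.
by rewrite mulr_sumr.
Qed.

Lemma sum_deg (T : finType) (c : T -> T -> R) : is_weight c -> \sum_t degf c t = 1.
Proof. by case. Qed.

Lemma pert_joining (h : U * V -> U * V -> R) :
  (forall x y, 0 <= tensorw a b x y + h x y) ->
  (forall x y, h x y = h y x) ->
  (forall u v v', \sum_(u' : U) h (u, v) (u', v') = 0) ->
  (forall u v u', \sum_(v' : V) h (u, v) (u', v') = 0) ->
  weight_joining a b (fun x y => tensorw a b x y + h x y).
Proof.
case: ha => ha0 has ha1; case: hb => hb0 hbs hb1.
move=> hpos hsym hsu hsv.
have hdeg : forall u v, degf (fun x y => tensorw a b x y + h x y) (u, v)
                        = degf a u * degf b v.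
  move=> u v; rewrite {1}/degf big_split /= -/(degf _ _) degT sumUV.
  by rewrite big1 ?addr0 // => u' _; apply: hsv.
split.
- split => //.
  + by move=> x y; rewrite hsym /tensorw has hbs.
  + rewrite -[RHS](sum_deg (c := a)) //.
    transitivity (\sum_(x : U * V) degf (fun x y => tensorw a b x y + h x y) x) => //.
    rewrite sumUV; apply: eq_bigr => u _.
    by under eq_bigr do rewrite hdeg; rewrite -mulr_sumr hb1 mulr1.
- move=> u; under eq_bigr do rewrite hdeg.
  by rewrite -mulr_sumr hb1 mulr1.
- move=> v; under eq_bigr do rewrite hdeg.
  by rewrite -mulr_suml ha1 mul1r.
- move=> u v u'; rewrite big_split /= hsv addr0 hdeg /tensorw /= -mulr_sumr.
  rewrite -/(degf b v); ring.
- move=> u v v'; rewrite big_split /= hsu addr0 hdeg /tensorw /= -mulr_suml.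
  rewrite -/(degf a u); ring.
Qed.

Lemma tensor_joining : weight_joining a b (tensorw a b).
Proof.
have := @pert_joining (fun _ _ => 0).
have E : (fun x y => tensorw a b x y + (fun _ _ : U * V => (0:R)) x y) = tensorw a b.
  by apply: functional_extensionality => x; apply: functional_extensionality => y; rewrite addr0.
rewrite E; apply.
- case: ha => ha0 _ _; case: hb => hb0 _ _ x y.
  by rewrite addr0 /tensorw mulr_ge0.
- by [].
- by move=> *; rewrite big1.
- by move=> *; rewrite big1.
Qed.
End Basic.

Section Tree.
Variable R : realType.

Lemma sum0_ge0 (T : finType) (f : T -> R) :
  (forall t, 0 <= f t) -> \sum_t f t = 0 -> forall t, f t = 0.
Proof.
move=> h0 hs t.
exact: (psumr_eq0P (fun i _ => h0 i) hs).
Qed.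

Lemma tree_zero (U : finType) (T : Type) (a : U -> U -> R) (F : U -> U -> T -> T -> R) :
  (forall p : seq U, (3 <= size p)%N -> uniq p -> ~~ cycle (edge a) p) ->
  (forall u u' w w', F u u' w w' != 0 -> 0 < a u u') ->
  (forall u, a u u = 0) ->
  (forall u u' w w', F u u' w w' = F u' u w' w) ->
  (forall u w w', \sum_u' F u u' w w' = 0) ->
  forall u u' w w', F u u' w w' = 0.
Proof.
move=> hac hsupp hloop hsym hsum u0 u1 w0 w1.
apply: NNPP => /eqP hne.
pose vv (c : bool) := if c then (w1, w0) else (w0, w1).
pose s : rel U := fun x y => [exists c : bool, F x y (vv c).1 (vv c).2 != 0].
have hs0 : forall x, ~~ s x x.
  move=> x; apply/existsP => -[c hc]; have := hsupp _ _ _ _ hc.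
  by rewrite hloop ltxx.
have hstep : forall x y, s x y -> exists z, (z != x) && s y z.
  move=> x y /existsP[c hc].
  have hc' : F y x (vv (~~c)).1 (vv (~~c)).2 != 0 by rewrite hsym; case: c hc.
  apply: NNPP => hno.
  have : \sum_z F y z (vv (~~c)).1 (vv (~~c)).2 = F y x (vv (~~c)).1 (vv (~~c)).2.
    rewrite (bigD1 x) //= big1 ?addr0 // => z hz.
    apply: NNPP => /eqP hF; apply: hno; exists z; rewrite hz /=.
    by apply/existsP; exists (~~c).
  by rewrite hsum => h0; move: hc'; rewrite -h0 eqxx.
have hxy : s u0 u1 by apply/existsP; exists false.
have [c [h3 hu hc]] := nb_cycle hs0 hstep hxy.
move: (hac c h3 hu); rewrite (sub_cycle _ hc) // => x y /existsP[c' /hsupp].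
by [].
Qed.

Variables (U V : finType) (a : U -> U -> R) (b : V -> V -> R).
Hypothesis ha : is_weight a.
Hypothesis hb : is_weight b.

Lemma weak_tree_tensor g :
  weight_joining a b g ->
  (forall u v, degf g (u, v) = degf a u * degf b v) ->
  acyclic a \/ acyclic b -> g = tensorw a b.
Proof.
case: ha => ha0 has ha1; case: hb => hb0 hbs hb1.
move=> [[hg0 hgs hg1] hm1 hm2 hc4 hc5] hr hac.
pose F u u' v v' := g (u, v) (u', v') - a u u' * b v v'.
have rowz : forall u v, degf g (u, v) = 0 -> forall y, g (u, v) y = 0.
  by move=> u v h y; apply: (sum0_ge0 (hg0 (u, v)) h).
have ha_z : forall u, degf a u = 0 -> forall u', a u u' = 0.
  by move=> u h u'; apply: (sum0_ge0 (ha0 u) h).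
have hb_z : forall v, degf b v = 0 -> forall v', b v v' = 0.
  by move=> v h v'; apply: (sum0_ge0 (hb0 v) h).
have Fsym : forall u u' v v', F u u' v v' = F u' u v' v.
  by move=> u u' v v'; rewrite /F hgs has hbs.
have Fsu : forall u v v', \sum_u' F u u' v v' = 0.
  move=> u v v'; rewrite /F sumrB.
  have [hq|hq] := eqVneq (degf b v) 0.
    rewrite big1 ?big1 ?subr0 // => u' _.
      by rewrite hb_z // mulr0.
    by rewrite rowz // hr hq mulr0.
  apply/eqP; rewrite subr_eq0; apply/eqP; apply: (mulfI hq).
  rewrite hc5 hr -mulr_suml -/(degf a u); ring.
have Fsv : forall u v u', \sum_v' F u u' v v' = 0.
  move=> u v u'; rewrite /F sumrB.
  have [hp|hp] := eqVneq (degf a u) 0.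
    rewrite big1 ?big1 ?subr0 // => v' _.
      by rewrite ha_z // mul0r.
    by rewrite rowz // hr hp mul0r.
  apply/eqP; rewrite subr_eq0; apply/eqP; apply: (mulfI hp).
  rewrite hc4 hr -mulr_sumr -/(degf b v); ring.
have Fsupp : forall u u' v v', F u u' v v' != 0 -> 0 < a u u' /\ 0 < b v v'.
  move=> u u' v v' hF; rewrite !lt0r ha0 hb0 !andbT.
  split; apply/negP => /eqP h0; move: hF; rewrite /F h0 ?mul0r ?mulr0 subr0.
  - have [hp|hp] := eqVneq (degf a u) 0.
      by rewrite rowz ?eqxx // hr hp mul0r.
    have := hc4 u v u'; rewrite h0 mul0r => /eqP; rewrite mulf_eq0 (negbTE hp) /=.
    move=> /eqP hs; rewrite (sum0_ge0 (fun v'' => hg0 (u, v) (u', v'')) hs v').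
    by rewrite eqxx.
  - have [hq|hq] := eqVneq (degf b v) 0.
      by rewrite rowz ?eqxx // hr hq mulr0.
    have := hc5 u v v'; rewrite h0 mul0r => /eqP; rewrite mulf_eq0 (negbTE hq) /=.
    move=> /eqP hs; rewrite (sum0_ge0 (fun u'' => hg0 (u, v) (u'', v')) hs u').
    by rewrite eqxx.
have F0 : forall u u' v v', F u u' v v' = 0.
  case: hac => -[hl hc].
  - apply: (tree_zero hc _ hl Fsym Fsu) => u u' w w' /Fsupp [] //.
  - move=> u u' v v'.
    pose F' v v' u u' := F u u' v v'.
    have := @tree_zero V U b F' hc _ hl _ _ v v' u u'; apply.
    + by move=> x x' w w' /Fsupp [].
    + by move=> *; rewrite /F' Fsym.
    + by move=> *; rewrite /F' Fsv.
apply functional_extensionality; case=> u v; apply functional_extensionality; case=> u' v'.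
by apply/eqP; rewrite -subr_eq0; apply/eqP; apply: F0.
Qed.
End Tree.

Section Cyc.
Variable R : realType.

Lemma minpos (T : finType) (f : T -> R) :
  exists e, 0 < e /\ forall t, 0 < f t -> e <= f t.
Proof.
exists (\big[Order.min/1]_(t | 0 < f t) f t); split.
  by elim/big_ind: _ => // x y hx hy; rewrite lt_min hx hy.
by move=> t ht; rewrite (bigD1 t) //= ge_min lexx.
Qed.

Definition cf (T : finType) (s : seq T) (u u' : T) : R :=
  (u \in s)%:R * ((u' == next s u)%:R - (u' == prev s u)%:R).

Lemma cf_sum (T : finType) (s : seq T) u : \sum_u' cf s u u' = 0.
Proof. by rewrite -mulr_sumr sumrB !sum_eq1 subrr mulr0. Qed.

Lemma cf_anti (T : finType) (s : seq T) u u' : uniq s -> cf s u' u = - cf s u u'.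
Proof.
move=> hs.
have Hn : forall x y, x \notin s -> y \in s -> (x == next s y) = false.
  by move=> x y hx hy; apply: contraNF hx => /eqP ->; rewrite mem_next.
have Hp : forall x y, x \notin s -> y \in s -> (x == prev s y) = false.
  by move=> x y hx hy; apply: contraNF hx => /eqP ->; rewrite mem_prev.
rewrite /cf; case hu: (u \in s); case hu': (u' \in s).
- have E1 : (u == next s u') = (u' == prev s u).
    rewrite eq_sym; apply/eqP/eqP => [<-|->]; [by rewrite prev_next | by rewrite next_prev].
  have E2 : (u == prev s u') = (u' == next s u).
    rewrite eq_sym; apply/eqP/eqP => [<-|->]; [by rewrite next_prev | by rewrite prev_next].
  by rewrite E1 E2 !mul1r opprB.
- by rewrite (Hn u' u) ?(Hp u' u) ?hu ?hu' //= mul0r subrr mulr0 oppr0.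
- by rewrite (Hn u u') ?(Hp u u') ?hu ?hu' //= mul0r subrr mulr0 oppr0.
- by rewrite !mul0r oppr0.
Qed.

Lemma cf_vals (T : finType) (s : seq T) u u' :
  [\/ cf s u u' = 0, cf s u u' = 1 | cf s u u' = -1].
Proof.
rewrite /cf; case: (u \in s); case: (u' == next s u); case: (u' == prev s u);
  rewrite /= ?mul0r ?mul1r ?subrr ?subr0 ?sub0r; by [constructor 1|constructor 2|constructor 3].
Qed.

Lemma cf_supp (T : finType) (s : seq T) (a : T -> T -> R) u u' :
  (forall x y, a x y = a y x) -> cycle (edge a) s -> cf s u u' != 0 -> 0 < a u u'.
Proof.
move=> hsym hc; rewrite /cf; case hu: (u \in s); last by rewrite mul0r eqxx.
case: (eqVneq u' (next s u)) => [->|_]; first by move=> _; exact: (next_cycle hc hu).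
case: (eqVneq u' (prev s u)) => [->|_]; last by rewrite subrr mulr0 eqxx.
by move=> _; rewrite hsym; exact: (prev_cycle hc hu).
Qed.

Lemma cf_nz (T : finType) (x0 x1 x2 : T) t :
  uniq [:: x0, x1, x2 & t] -> cf [:: x0, x1, x2 & t] x1 x0 = -1.
Proof.
move=> /= /andP[hx0 _].
have h01 : x0 != x1 by apply: contra hx0 => /eqP ->; rewrite mem_head.
have h02 : x0 != x2 by apply: contra hx0 => /eqP ->; rewrite !inE eqxx orbT.
rewrite /cf /next /prev /= [x1 == x0]eq_sym (negbTE h01) !eqxx (negbTE h02).
by rewrite !inE eqxx orbT /= mul1r sub0r.
Qed.

Variables (U V : finType) (a : U -> U -> R) (b : V -> V -> R).
Hypothesis ha : is_weight a.
Hypothesis hb : is_weight b.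

Lemma cyc_not_strong sG sH :
  (3 <= size sG)%N -> uniq sG -> cycle (edge a) sG ->
  (3 <= size sH)%N -> uniq sH -> cycle (edge b) sH ->
  ~ strongly_disjoint a b.
Proof.
move=> hG3 hGu hGc hH3 hHu hHc hsd.
case: sG hG3 hGu hGc => [|x0 [|x1 [|x2 t]]] // _ hGu hGc.
case: sH hH3 hHu hHc => [|y0 [|y1 [|y2 t']]] // _ hHu hHc.
set sG := [:: x0, x1, x2 & t] in hGu hGc *.
set sH := [:: y0, y1, y2 & t'] in hHu hHc *.
have [ha0 has ha1] := ha; have [hb0 hbs hb1] := hb.
have [e [he0 he]] := minpos (fun z : (U * U) * (V * V) => a z.1.1 z.1.2 * b z.2.1 z.2.2).
pose h (x y : U * V) := e * cf sG x.1 y.1 * cf sH x.2 y.2.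
have hj := @pert_joining R U V a b ha hb h.
have J : weight_joining a b (fun x y => tensorw a b x y + h x y).
  apply: hj.
  - move=> [u v] [u' v']; rewrite /h /tensorw /=.
    have hT : 0 <= a u u' * b v v' by rewrite mulr_ge0.
    have [hg|hg] := eqVneq (cf sG u u') 0; first by rewrite hg mulr0 mul0r addr0.
    have [hh|hh] := eqVneq (cf sH v v') 0; first by rewrite hh mulr0 addr0.
    have hTe : e <= a u u' * b v v'.
      apply: (he ((u, u'), (v, v'))); rewrite /= mulr_gt0 //.
        exact: cf_supp hGc hg.
      exact: cf_supp hHc hh.
    have hp : -1 <= cf sG u u' * cf sH v v'.
      by case: (cf_vals sG u u') hg => ->; case: (cf_vals sH v v') hh => ->;
        rewrite ?eqxx // => _ _; rewrite ?mulrNN ?mulr1 ?mul1r ?mulrN1; lra.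
    rewrite -mulrA; nra.
  - by move=> [u v] [u' v']; rewrite /h /= (cf_anti _ _ hGu) (cf_anti _ _ hHu) -mulrA mulrNN mulrA.
  - move=> u v v'; rewrite /h /= -mulr_suml -mulr_sumr cf_sum mulr0 mul0r //.
  - by move=> u v u'; rewrite /h /= -mulr_sumr cf_sum mulr0.
have /hsd E := J.
have := f_equal (fun f => f (x1, y1) (x0, y0)) E.
rewrite /h /= (cf_nz hGu) (cf_nz hHu) => /eqP.
move=> /eqP h0; lra.
Qed.
End Cyc.

Section Bip.
Variable R : realType.

Lemma exists_edge (U : finType) (a : U -> U -> R) : is_weight a ->
  exists u u', 0 < a u u'.
Proof.
case=> ha0 _ ha1; apply: NNPP => hno.
have h0 : forall u u', a u u' = 0.
  move=> u u'; apply/eqP; rewrite eq_le ha0 andbT leNgt; apply/negP => h.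
  by apply: hno; exists u, u'.
move: ha1; rewrite big1 => [|u _]; last by rewrite big1.
by move/eqP; rewrite eq_sym oner_eq0.
Qed.

Section Color.
Variables (U : finType) (a : U -> U -> R).
Hypothesis ha : is_weight a.
Hypothesis hac : acyclic a.
Hypothesis hconn : connected_graph a.

Let ea := edge a.
Definition E2 : rel (U * bool) := fun x y => ea x.1 y.1 && (y.2 == ~~ x.2).

Lemma E2_proj p x : path E2 x p ->
  [/\ path ea x.1 (map fst p), (last x p).2 = x.2 (+) odd (size p)
    & (last x p).1 = last x.1 (map fst p)].
Proof.
elim: p x => [|y p IH] x /=; first by rewrite addbF.
case/andP => /andP[hxy /eqP hy2] /IH [h1 h2 h3]; split => //.
- by rewrite hxy.
- by rewrite h2 hy2; case: (x.2); case: (odd _).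
Qed.

Lemma ea_sym : symmetric ea.
Proof. by case: ha => _ hs _ x y; rewrite /ea /edge hs. Qed.

Lemma E2_sym : symmetric E2.
Proof.
move=> x y; rewrite /E2 ea_sym; congr (_ && _).
by case: (x.2); case: (y.2).
Qed.

Lemma noodd x : ~ connect E2 (x, false) (x, true).
Proof.
case/connectP => p hp hl.
have [h1 h2 h3] := E2_proj hp.
case/lastP: p hp hl h1 h2 h3 => [|p0 z] hp hl h1 h2 h3; first by [].
rewrite last_rcons in hl h2 h3; rewrite -hl /= in h2 h3.
rewrite size_rcons /= in h2.
have hc : cycle ea (x :: map fst p0).
  by move: h1; rewrite -hl map_rcons.
have hoddc : odd (size (x :: map fst p0)) by rewrite /= size_map -h2.
have hl0 : forall y, ~~ ea y y by move=> y; rewrite /ea /edge (proj1 hac) ltxx.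
have [c [h3c huc hcc]] := odd_cycle hl0 (leqnn _) hc hoddc.
by move: (proj2 hac c h3c huc); rewrite hcc.
Qed.

Lemma lift p x : path ea x p -> forall b, exists b', connect E2 (x, b) (last x p, b').
Proof.
elim: p x => [|y p IH] x /=; first by move=> _ b; exists b.
case/andP => hxy hp b; have [b' hb'] := IH y hp (~~ b).
exists b'; apply: connect_trans hb'; apply: connect1.
by rewrite /E2 /= hxy eqxx.
Qed.

Lemma tree_color (r : U) : exists col : U -> bool,
  forall x y, 0 < a x y -> col y = ~~ col x.
Proof.
have csym := sym_connect_sym E2_sym.
exists (fun u => connect E2 (r, false) (u, false)) => x y hxy.
have all2 : forall u, exists b, connect E2 (r, false) (u, b).
  move=> u; case/connectP: (hconn r u) => p hp ->; exact: lift hp false.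
have both : forall u b, connect E2 (r, false) (u, b) ->
    connect E2 (r, false) (u, ~~ b) -> False.
  move=> u b h1 h2.
  have h3 : connect E2 (u, b) (u, ~~ b) by apply: connect_trans h2; rewrite csym.
  case: b h3 {h1 h2} => h3; first by apply: (noodd (x := u)); rewrite csym.
  exact: noodd h3.
have step : forall b, connect E2 (r, false) (x, b) -> connect E2 (r, false) (y, ~~ b).
  move=> b h; apply: connect_trans h _; apply: connect1.
  by rewrite /E2 /= eqxx andbT.
case hx: (connect E2 (r, false) (x, false)) => /=.
  have := step _ hx => hy; apply/negP => hy'; exact: (both y true hy hy').
have [b hb] := all2 x.
case: b hb => hb; last by rewrite hb in hx.
exact: (step _ hb).
Qed.
End Color.

Lemma half (U : finType) (a : U -> U -> R) (c : U -> bool) :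
  is_weight a -> (forall x y, 0 < a x y -> c y = ~~ c x) ->
  forall bb, 2 * \sum_u (c u == bb)%:R * degf a u = 1.
Proof.
case=> ha0 has ha1 hc bb.
pose S bb := \sum_u \sum_u' (c u == bb)%:R * a u u'.
have ES : forall bb, \sum_u (c u == bb)%:R * degf a u = S bb.
  by move=> b0; apply: eq_bigr => u _; rewrite mulr_sumr.
have Sn : forall bb, S bb = S (~~ bb).
  move=> b0; rewrite /S.
  transitivity (\sum_u \sum_u' (c u' == ~~ b0)%:R * a u u').
    apply: eq_bigr => u _; apply: eq_bigr => u' _.
    have [h0|h0] := eqVneq (a u u') 0; first by rewrite h0 !mulr0.
    have hp : 0 < a u u' by rewrite lt0r h0 ha0.
    by rewrite (hc _ _ hp); case: (c u); case: b0.
  rewrite exchange_big /=; apply: eq_bigr => u _; apply: eq_bigr => u' _.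
  by rewrite has.
have Sa : S bb + S (~~ bb) = 1.
  rewrite -ha1 /S -big_split /=; apply: eq_bigr => u _.
  rewrite -big_split /=; apply: eq_bigr => u' _.
  by rewrite -mulrDl; case: (c u); case: bb; rewrite /= ?add0r ?addr0 mul1r.
by rewrite ES mulr_natl mulr2n; rewrite {2}Sn.
Qed.
End Bip.

Section Bip2.
Variable R : realType.
Variables (U V : finType) (a : U -> U -> R) (b : V -> V -> R).
Hypothesis ha : is_weight a.
Hypothesis hb : is_weight b.
Variables (cG : U -> bool) (cH : V -> bool).
Hypothesis hcG : forall x y, 0 < a x y -> cG y = ~~ cG x.
Hypothesis hcH : forall x y, 0 < b x y -> cH y = ~~ cH x.

Definition gam (x y : U * V) : R :=
  2 * (a x.1 y.1 * b x.2 y.2) * (cG x.1 == cH x.2)%:R.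

Lemma deg_gam u v :
  degf gam (u, v) = 2 * (cG u == cH v)%:R * (degf a u * degf b v).
Proof.
rewrite -degT /degf mulr_sumr; apply: eq_bigr => y _.
by rewrite /gam /tensorw /=; ring.
Qed.

Lemma bip_joining : weight_joining a b gam.
Proof.
have [ha0 has ha1] := ha; have [hb0 hbs hb1] := hb.
have hG := half ha hcG; have hH := half hb hcH.
split.
- split.
  + by move=> x y; rewrite /gam !mulr_ge0 ?ler0n.
  + move=> [u v] [u' v']; rewrite /gam /=.
    have [h0|h0] := eqVneq (a u u' * b v v') 0.
      by rewrite (has u' u) (hbs v' v) h0 !mulr0 !mul0r.
    rewrite (has u' u) (hbs v' v); congr (_ * _).
    move: h0; rewrite mulf_eq0 negb_or => /andP[h1 h2].
    have p1 : 0 < a u u' by rewrite lt0r h1 ha0.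
    have p2 : 0 < b v v' by rewrite lt0r h2 hb0.
    by rewrite (hcG p1) (hcH p2); case: (cG u); case: (cH v).
  + transitivity (\sum_(x : U * V) degf gam x) => //.
    rewrite sumUV -ha1; apply: eq_bigr => u _.
    under eq_bigr do rewrite deg_gam.
    transitivity (degf a u * (2 * \sum_v (cH v == cG u)%:R * degf b v)).
      rewrite mulr_sumr mulr_sumr; apply: eq_bigr => v _.
      by rewrite eq_sym; ring.
    by rewrite hH mulr1.
- move=> u; under eq_bigr do rewrite deg_gam.
  transitivity (degf a u * (2 * \sum_v (cH v == cG u)%:R * degf b v)).
    rewrite mulr_sumr mulr_sumr; apply: eq_bigr => v _.
    by rewrite eq_sym; ring.
  by rewrite hH mulr1.
- move=> v; under eq_bigr do rewrite deg_gam.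
  transitivity (degf b v * (2 * \sum_u (cG u == cH v)%:R * degf a u)).
    rewrite mulr_sumr mulr_sumr; apply: eq_bigr => u _.
    by ring.
  by rewrite hG mulr1.
- move=> u v u'; rewrite deg_gam /gam /=.
  under eq_bigr do rewrite mulrA.
  rewrite -mulr_suml -mulr_sumr -/(degf b v); ring.
- move=> u v v'; rewrite deg_gam /gam /=.
  transitivity (degf b v * (2 * b v v' * (cG u == cH v)%:R * \sum_u' a u u')).
    congr (_ * _); rewrite !mulr_sumr; apply: eq_bigr => u' _; ring.
  rewrite -/(degf a u); ring.
Qed.

Lemma bip_not_strong : ~ strongly_disjoint a b.
Proof.
have [ha0 has ha1] := ha; have [hb0 hbs hb1] := hb.
move=> hsd; have /hsd E := bip_joining.
have [u [u' hu]] := exists_edge ha; have [v [v' hv]] := exists_edge hb.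
have key : forall x x' : U, 0 < a x x' -> ((cG x == cH v)%:R : R) = 0 ->
    False.
  move=> x x' hx hc.
  have := f_equal (fun f => f (x, v) (x', v')) E.
  rewrite /gam /tensorw /= hc mulr0 => /esym /eqP.
  by rewrite mulf_eq0 !gt_eqF.
case hc: (cG u == cH v).
  apply: (key u' u); first by rewrite has.
  by rewrite (hcG hu); move: hc; case: (cG u); case: (cH v).
by apply: (key u u' hu); rewrite hc.
Qed.
End Bip2.

Theorem theorem5p5 (R : realType) (U V : finType)
    (a : U -> U -> R) (b : V -> V -> R) :
  is_weight a -> is_weight b ->
  no_self_loops a -> no_self_loops b ->
  connected_graph a -> connected_graph b ->
  (strongly_disjoint a b <->
     (weakly_disjoint a b /\
      ((is_tree a /\ ~ is_tree b) \/ (~ is_tree a /\ is_tree b)))).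
Proof.
move=> ha hb hla hlb hca hcb.
have cyc_of : forall (T : finType) (c : T -> T -> R), no_self_loops c -> ~ acyclic c ->
    exists p, [/\ (3 <= size p)%N, uniq p & cycle (edge c) p].
  move=> T c hl hna; apply: NNPP => hno; apply: hna; split => // p h3 hu.
  by apply/negP => hc; apply: hno; exists p.
split.
- move=> hsd; split.
    by move=> g /hsd -> u v; exact: degT.
  have [hA|hA] := classic (acyclic a); have [hB|hB] := classic (acyclic b).
  + exfalso.
    have [u [_ _]] := exists_edge ha; have [v [_ _]] := exists_edge hb.
    have [cG hcG] := tree_color ha hA hca u.
    have [cH hcH] := tree_color hb hB hcb v.
    exact: (bip_not_strong ha hb hcG hcH hsd).
  + by left; split => // -[].
  + by right; split => // -[].
  + exfalso.
    have [sG [h1 h2 h3]] := cyc_of _ _ hla hA.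
    have [sH [h4 h5 h6]] := cyc_of _ _ hlb hB.
    exact: (cyc_not_strong ha hb h1 h2 h3 h4 h5 h6 hsd).
- move=> [hw ht] g; split.
  + move=> hj; apply: (weak_tree_tensor ha hb hj (hw g hj)).
    by case: ht => [[[_ ?] _]|[_ [_ ?]]]; [left|right].
  + by move=> ->; exact: tensor_joining.
Qed.
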